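(* Let $n\ge 2$ be even and let $\Phi\subset\mathbb{R}^3$ be a root system of type $I_2(n)$ (the $2n$ unit vectors at angles $k\pi/n$, $k=0,\dots,2n-1$, in a 2-dimensional subspace of $\mathbb{R}^3$). Let $P$ be the group generated under the geometric product by $\Phi\cup\{e_1e_2e_3\}$ and let $G=P\cap \mathrm{Cl}^+(3)$ be its even part. Then $G$, regarded as a set of vectors in the 4-dimensional Euclidean space $(\mathrm{Cl}^+(3),(\cdot,\cdot))$, is a root system of type $I_2(n)\oplus I_2(n)$.
   Context: $\mathrm{Cl}(3)$ is the real Clifford algebra of Euclidean $\mathbb{R}^3=\mathrm{span}\{e_1,e_2,e_3\}$ with orthonormal basis $e_1,e_2,e_3$ ($e_i^2=1$, $e_ie_j=-e_je_i$ for $i\neq j$); vectors of $\mathbb{R}^3$ are elements of $\mathrm{Cl}(3)$ and $e_1e_2e_3$ is the pseudoscalar (inversion). The even subalgebra $\mathrm{Cl}^+(3)$ is spanned by $1,e_2e_3,e_3e_1,e_1e_2$. Reversal $\tilde{\ }$ reverses the order of vector factors. The spinor inner product $(R_1,R_2)=\tfrac12(R_1\tilde R_2+R_2\tilde R_1)$ makes $\mathrm{Cl}^+(3)$ a 4D Euclidean space with orthonormal basis $1,e_2e_3,e_3e_1,e_1e_2$. A root system is a finite set $\Phi$ of nonzero vectors in a Euclidean space, spanning its linear span, with $\Phi\cap\mathbb{R}\alpha=\{\pm\alpha\}$ and $s_\alpha(\Phi)=\Phi$ for all $\alpha\in\Phi$, where $s_\alpha(x)=x-2\frac{(x,\alpha)}{(\alpha,\alpha)}\alpha$.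 $I_2(n)$ denotes the rank-2 root system of the dihedral group of order $2n$; $I_2(n)\oplus I_2(n)$ is the orthogonal union of two copies of it in mutually orthogonal planes. *)

(* Defs.v *)
From HB Require Import structures.
From mathcomp Require Import all_boot all_order all_algebra.
From mathcomp Require Import reals trigo.
Set Implicit Arguments. Unset Strict Implicit. Unset Printing Implicit Defensive.
Import Order.TTheory GRing.Theory Num.Theory.
Local Open Scope ring_scope.

(* A basis blade is indexed by (a1,a2,a3) : bool*bool*bool and stands for
   e1^a1 e2^a2 e3^a3 (in this order). *)
Definition blade := (bool * bool * bool)%type.
Notation cl3 R := ({ffun blade -> (R : realType)^o}) (only parsing).

Definition bxor (a b : blade) : blade :=
  (addb a.1.1 b.1.1, addb a.1.2 b.1.2, addb a.2 b.2).

(* sign with e1^a1 e2^a2 e3^a3 * e1^b1 e2^b2 e3^b3 = sgn * blade (bxor a b),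
   using e_i^2 = 1 and e_i e_j = - e_j e_i for i <> j *)
Definition bsgn (R : realType) (a b : blade) : R :=
  (-1) ^+ (b.1.1 * (a.1.2 + a.2) + b.1.2 * a.2)%N.

Definition grade (a : blade) : nat := (a.1.1 + a.1.2 + a.2)%N.

Definition gp (R : realType) (x y : cl3 R) : cl3 R :=
  [ffun c => \sum_(a : blade) \sum_(b : blade)
     (if bxor a b == c then bsgn R a b * x a * y b else 0)].

Definition rev (R : realType) (x : cl3 R) : cl3 R :=
  [ffun a => (-1) ^+ 'C(grade a, 2) * x a].

Definition blade_elt (R : realType) (c : blade) : cl3 R :=
  [ffun a => if a == c then 1 else 0].

Definition cl1 (R : realType) : cl3 R := blade_elt R (false, false, false).
Definition e123 (R : realType) : cl3 R := blade_elt R (true, true, true).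

Definition scal (R : realType) (x : cl3 R) : R := x (false, false, false).

Definition vec (R : realType) (w : 'rV[R]_3) : cl3 R :=
  w ord0 0 *: blade_elt R (true, false, false)
  + w ord0 1 *: blade_elt R (false, true, false)
  + w ord0 2 *: blade_elt R (false, false, true).

Definition dot (R : realType) (u v : 'rV[R]_3) : R := \sum_i u ord0 i * v ord0 i.

Definition even_elt (R : realType) (x : cl3 R) : Prop :=
  forall a : blade, odd (grade a) -> x a = 0.

Definition spinor_ip (R : realType) (x y : cl3 R) : R :=
  (scal (gp x (rev y)) + scal (gp y (rev x))) / 2.

Definition gen_or_inv (R : realType) (S : cl3 R -> Prop) (s : cl3 R) : Prop :=
  S s \/ exists t, S t /\ gp t s = cl1 R /\ gp s t = cl1 R.

Inductive gen_group (R : realType) (S : cl3 R -> Prop) : cl3 R -> Prop :=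
  | gen_group_one : gen_group S (cl1 R)
  | gen_group_mul : forall s x, gen_or_inv S s -> gen_group S x ->
                      gen_group S (gp s x).

Definition reflect_in (R : realType) (V : lmodType R) (ip : V -> V -> R)
  (a x : V) : V := x - (2 * ip x a / ip a a) *: a.

(* A root system: a finite set of nonzero vectors with
   Phi /\ R a = {a, -a} and s_a(Phi) = Phi for all a in Phi.
   ("spanning its linear span" is automatic.) *)
Definition is_root_system (R : realType) (V : lmodType R) (ip : V -> V -> R)
  (Phi : V -> Prop) : Prop :=
  [/\ (exists s : seq V, forall x, Phi x <-> x \in s),
      (forall a, Phi a -> a != 0),
      (forall a, Phi a -> forall c : R, Phi (c *: a) <-> (c = 1 \/ c = -1))
    & (forall a x, Phi a -> Phi x -> Phi (reflect_in ip a x))].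

Definition dihedral_roots (R : realType) (V : lmodType R) (n : nat) (a b : V)
  (x : V) : Prop :=
  exists2 k : nat, (k < 2 * n)%N &
    x = cos (k%:R * pi / n%:R) *: a + sin (k%:R * pi / n%:R) *: b.

Definition type_I2_sum_I2 (R : realType) (V : lmodType R) (ip : V -> V -> R)
  (n : nat) (Phi : V -> Prop) : Prop :=
  exists a1 b1 a2 b2 : V,
    [/\ [/\ ip a1 a1 = 1, ip b1 b1 = 1, ip a2 a2 = 1 & ip b2 b2 = 1],
        [/\ ip a1 b1 = 0, ip a1 a2 = 0 & ip a1 b2 = 0],
        [/\ ip b1 a2 = 0, ip b1 b2 = 0 & ip a2 b2 = 0]
      & (forall x, Phi x <-> (dihedral_roots n a1 b1 x \/ dihedral_roots n a2 b2 x))].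

Definition I2_in_R3 (R : realType) (n : nat) (u v : 'rV[R]_3) (x : cl3 R) : Prop :=
  exists2 k : nat, (k < 2 * n)%N &
    x = vec (cos (k%:R * pi / n%:R) *: u + sin (k%:R * pi / n%:R) *: v).

(* Main.v *)
Require Import Defs.
From HB Require Import structures.
From mathcomp Require Import all_boot all_order all_algebra.
From mathcomp Require Import reals trigo.
From mathcomp Require Import ring lra zify.
Import Order.TTheory GRing.Theory Num.Theory.
Local Open Scope ring_scope.

Module Helpers.
Set Implicit Arguments. Unset Strict Implicit.


Section Alg.
Variable R : realType.

Lemma sum_blade (F : blade -> R^o) : \sum_(a : blade) F a =
  F (false,false,false) + F (false,false,true) + F (false,true,false) + F (false,true,true)
  + F (true,false,false) + F (true,false,true) + F (true,true,false) + F (true,true,true).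
Proof.
rewrite (eq_bigr (fun a => F (a.1, a.2))); last by case.
rewrite -(pair_big xpredT xpredT (fun p b => F (p,b))) /=.
under eq_bigr do rewrite big_bool.
rewrite (eq_bigr (fun a => F (a.1, a.2, true) + F (a.1,a.2,false))); last by case.
rewrite -(pair_big xpredT xpredT (fun p b => F (p,b,true) + F(p,b,false))) /=.
under eq_bigr do rewrite big_bool.
rewrite big_bool /=.
ring.
Qed.

Definition bsgnb (a b : blade) : bool := addb (b.1.1 && addb a.1.2 a.2) (b.1.2 && a.2).
Lemma bsgnE (a b : blade) : bsgn R a b = if bsgnb a b then -1 else 1.
Proof.
rewrite /bsgn -signr_odd.
have -> : odd (b.1.1 * (a.1.2 + a.2) + b.1.2 * a.2)%N = bsgnb a b.
  by case: a => [[[] []] []]; case: b => [[[] []] []].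
by case: bsgnb; rewrite ?expr1 ?expr0.
Qed.

Lemma bxor_eq (a b c : blade) : (bxor a b == c) = (b == bxor a c).
Proof. by case: a => [[[] []] []]; case: b => [[[] []] []]; case: c => [[[] []] []]. Qed.

Lemma gpE (x y : cl3 R) c : gp x y c =
  \sum_(a : blade) (if bsgnb a (bxor a c) then -1 else 1) * x a * y (bxor a c).
Proof.
rewrite ffunE; apply: eq_bigr => a _.
rewrite (eq_bigr (fun b => if b == bxor a c then bsgn R a b * x a * y b else 0)); last first.
  by move=> b _; rewrite bxor_eq.
by rewrite -big_mkcond big_pred1_eq bsgnE.
Qed.

Definition revb (a : blade) : bool := (a.1.1 && a.1.2) || (a.1.1 && a.2) || (a.1.2 && a.2).
Lemma revE (x : cl3 R) a : Defs.rev x a = (if revb a then -1 else 1) * x a.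
Proof.
rewrite ffunE -signr_odd.
have -> : odd 'C(grade a, 2) = revb a by case: a => [[[] []] []].
by case: revb; rewrite ?expr1 ?expr0.
Qed.

Lemma scaleRo (k : R) (x : R^o) : k *: x = k * x. Proof. by []. Qed.

Lemma clD (x y : cl3 R) a : (x + y) a = x a + y a. Proof. by rewrite ffunE. Qed.
Lemma clN (x : cl3 R) a : (- x) a = - x a. Proof. by rewrite ffunE. Qed.
Lemma clZ k (x : cl3 R) a : (k *: x) a = k * x a. Proof. by rewrite ffunE. Qed.
Lemma cl0 a : (0 : cl3 R) a = 0. Proof. by rewrite ffunE. Qed.

Ltac gpx := repeat progress (rewrite ?clD ?clN ?clZ ?cl0 ?gpE ?revE ?sum_blade /= ?/bxor /=).
Ltac clx := apply/ffunP => -[[[] []] []]; gpx.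
Ltac fin := rewrite ?ffunE /= ?scaleRo; ring.

Lemma gpA (x y z : cl3 R) : gp (gp x y) z = gp x (gp y z).
Proof. clx; ring. Qed.
Lemma gp1 (x : cl3 R) : gp x (cl1 R) = x.
Proof. clx; fin. Qed.
Lemma g1p (x : cl3 R) : gp (cl1 R) x = x.
Proof. clx; fin. Qed.
Lemma gpDl (x y z : cl3 R) : gp (x + y) z = gp x z + gp y z.
Proof. clx; fin. Qed.
Lemma gpDr (x y z : cl3 R) : gp z (x + y) = gp z x + gp z y.
Proof. clx; fin. Qed.
Lemma gpZl k (x z : cl3 R) : gp (k *: x) z = k *: gp x z.
Proof. clx; fin. Qed.
Lemma gpZr k (x z : cl3 R) : gp z (k *: x) = k *: gp z x.
Proof. clx; fin. Qed.
Lemma gpIC (x : cl3 R) : gp (e123 R) x = gp x (e123 R).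
Proof. clx; fin. Qed.
Lemma gpII : gp (e123 R) (e123 R) = - cl1 R.
Proof. clx; fin. Qed.
End Alg.


Section Alg2.
Variable R : realType.
Definition vecc (p : 'rV[R]_3) (a : blade) : R :=
  match a with
  | (true,false,false) => p ord0 0
  | (false,true,false) => p ord0 1
  | (false,false,true) => p ord0 2
  | _ => 0 end.
Lemma vecE p a : vec p a = vecc p a.
Proof. rewrite /vec !(clD, clZ) !ffunE; case: a => [[[] []] []] /=; ring. Qed.
Lemma cl1E a : cl1 R a = if a == (false,false,false) then 1 else 0.
Proof. by rewrite ffunE. Qed.
Lemma e123E a : e123 R a = if a == (true,true,true) then 1 else 0.
Proof. by rewrite ffunE. Qed.

Ltac gpx := repeat progress (rewrite ?vecE ?cl1E ?e123E ?clD ?clN ?clZ ?cl0 ?gpE ?revE ?sum_blade /= ?/bxor /=).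
Ltac clx := apply/ffunP => -[[[] []] []]; gpx.
Lemma blE (c a : blade) : blade_elt R c a = if a == c then 1 else 0.
Proof. by rewrite ffunE. Qed.
Ltac fin := ring.

Lemma dotE (p q : 'rV[R]_3) : dot p q = p ord0 0 * q ord0 0 + p ord0 1 * q ord0 1 + p ord0 2 * q ord0 2.
Proof.
rewrite /dot !big_ord_recl big_ord0 addr0 addrA.
by congr (_ * _ + _ * _ + _ * _); congr (_ _ _); apply/val_inj.
Qed.

Lemma vec_lin (a b : R) (p q : 'rV[R]_3) : vec (a *: p + b *: q) = a *: vec p + b *: vec q.
Proof. apply/ffunP => i; rewrite /vec !(clD, clZ) !mxE; ring. Qed.

Lemma vec_sq (p : 'rV[R]_3) : gp (vec p) (vec p) = dot p p *: cl1 R.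
Proof. rewrite dotE. clx; fin. Qed.

Lemma vec_anti (p q : 'rV[R]_3) : gp (vec p) (vec q) + gp (vec q) (vec p) = (2 * dot p q) *: cl1 R.
Proof. rewrite dotE. clx; fin. Qed.
End Alg2.


Section Par.
Variable R : realType.
Ltac gpx := repeat progress (rewrite ?vecE ?cl1E ?e123E ?clD ?clN ?clZ ?cl0 ?gpE ?revE ?sum_blade /= ?/bxor /=).

Definition odd_elt (x : cl3 R) := forall a : blade, ~~ odd (grade a) -> x a = 0.

Lemma evenP (x : cl3 R) : even_elt x ->
  [/\ x (true,false,false) = 0, x (false,true,false) = 0, x (false,false,true) = 0 & x (true,true,true) = 0].
Proof. by move=> h; split; apply: h. Qed.
Lemma oddP (x : cl3 R) : odd_elt x ->
  [/\ x (false,false,false) = 0, x (true,true,false) = 0, x (true,false,true) = 0 & x (false,true,true) = 0].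
Proof. by move=> h; split; apply: h. Qed.

Lemma gp_oo (x y : cl3 R) : odd_elt x -> odd_elt y -> even_elt (gp x y).
Proof.
move=> /oddP [h1 h2 h3 h4] /oddP [k1 k2 k3 k4] [[[] []] []] //= _; gpx;
  rewrite h1 h2 h3 h4 k1 k2 k3 k4; ring.
Qed.
Lemma gp_oe (x y : cl3 R) : odd_elt x -> even_elt y -> odd_elt (gp x y).
Proof.
move=> /oddP [h1 h2 h3 h4] /evenP [k1 k2 k3 k4] [[[] []] []] //= _; gpx;
  rewrite h1 h2 h3 h4 k1 k2 k3 k4; ring.
Qed.
Lemma even_lin (a b : R) (x y : cl3 R) : even_elt x -> even_elt y -> even_elt (a *: x + b *: y).
Proof. by move=> hx hy c hc; rewrite clD !clZ hx // hy // !mulr0 addr0. Qed.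
Lemma odd_lin (a b : R) (x y : cl3 R) : odd_elt x -> odd_elt y -> odd_elt (a *: x + b *: y).
Proof. by move=> hx hy c hc; rewrite clD !clZ hx // hy // !mulr0 addr0. Qed.
Lemma vec_odd p : odd_elt (vec p).
Proof. by move=> [[[] []] []] //= _; rewrite vecE. Qed.
Lemma e123_odd : odd_elt (e123 R).
Proof. by move=> [[[] []] []] //= _; rewrite e123E. Qed.
Lemma cl1_even : even_elt (cl1 R).
Proof. by move=> [[[] []] []] //= _; rewrite cl1E. Qed.
Lemma eo0 (x : cl3 R) : even_elt x -> odd_elt x -> x = 0.
Proof. by move=> he ho; apply/ffunP => a; rewrite cl0; case: (boolP (odd (grade a))) => h; [apply: he|apply: ho]. Qed.
End Par.


Section Ang.
Variable R : realType.
Variable n : nat.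
Hypothesis n0 : (0 < n)%N.

Definition th (k : nat) : R := k%:R * pi / n%:R.
Definition ang (c s : R) := exists2 k : nat, (k < 2 * n)%N & c = cos (th k) /\ s = sin (th k).

Lemma nR0 : n%:R != 0 :> R.
Proof. by rewrite pnatr_eq0 -lt0n. Qed.

Lemma thD k l : th (k + l) = th k + th l.
Proof. by rewrite /th natrD !mulrDl. Qed.
Lemma th2n : th (2 * n) = pi *+ 2.
Proof. rewrite /th natrM -mulr_natr; field; exact: nR0. Qed.
Lemma thn : th n = pi.
Proof. rewrite /th; field; exact: nR0. Qed.

Lemma ang_eq c s c' s' : ang c s -> c = c' -> s = s' -> ang c' s'.
Proof. by move=> h <- <-. Qed.

Lemma ang1 : ang 1 0.
Proof. by exists 0%N; rewrite ?muln_gt0 // /th mul0r mul0r cos0 sin0. Qed.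

Lemma angm1 : ang (-1) 0.
Proof. exists n; first by lia. by rewrite thn cospi sinpi. Qed.

Lemma ang_unit c s : ang c s -> c * c + s * s = 1.
Proof. by case=> k _ [-> ->]; rewrite -!expr2 cos2Dsin2. Qed.

Lemma ang_add c1 s1 c2 s2 : ang c1 s1 -> ang c2 s2 ->
  ang (c1 * c2 - s1 * s2) (s1 * c2 + c1 * s2).
Proof.
case=> k hk [-> ->]; case=> l hl [-> ->].
rewrite -cosD -sinD -thD.
case: (ltnP (k + l) (2 * n)) => h; first by exists (k + l)%N.
exists (k + l - 2 * n)%N; first by rewrite ltn_subLR // addnn -mul2n; lia.
have e : th (k + l) = th (k + l - 2 * n) + pi *+ 2 by rewrite -th2n -thD subnK.
by rewrite e cosD2pi sinD2pi.
Qed.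

Lemma ang_conj c s : ang c s -> ang c (- s).
Proof.
case=> k hk [-> ->].
case: k hk => [|k] hk.
  by exists 0%N => //; rewrite /th !mul0r sin0 oppr0.
exists (2 * n - k.+1)%N; first by lia.
have e : th (2 * n - k.+1) = - th k.+1 + pi *+ 2.
  have e1 : th (2 * n - k.+1) + th k.+1 = pi *+ 2 by rewrite -thD subnK ?th2n // ltnW.
  by rewrite -e1; ring.
by rewrite e cosD2pi sinD2pi cosN sinN.
Qed.

Lemma ang_neg c s : ang c s -> ang (- c) (- s).
Proof.
move=> h; apply: (ang_eq (ang_add h angm1)); ring.
Qed.
End Ang.


Section RS.
Variable R : realType.
Variable n : nat.
Hypothesis n0 : (0 < n)%N.
Variable V : lmodType R.
Variable ip : V -> V -> R.
Hypothesis ipDl : forall x y z, ip (x + y) z = ip x z + ip y z.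
Hypothesis ipZl : forall k x z, ip (k *: x) z = k * ip x z.
Hypothesis ipC : forall x y, ip x y = ip y x.

Lemma ipDr x y z : ip z (x + y) = ip z x + ip z y.
Proof. by rewrite ipC ipDl !(ipC z). Qed.
Lemma ipZr k x z : ip z (k *: x) = k * ip z x.
Proof. by rewrite ipC ipZl ipC. Qed.

Lemma ip_comb a b a' b' c s c' s' :
  ip (c *: a + s *: b) (c' *: a' + s' *: b') =
  c * c' * ip a a' + c * s' * ip a b' + s * c' * ip b a' + s * s' * ip b b'.
Proof. rewrite ipDl !ipDr !ipZl !ipZr; ring. Qed.

Definition D (a b x : V) := exists c s, ang n c s /\ x = c *: a + s *: b.

Lemma dihedralP a b x : dihedral_roots n a b x <-> D a b x.
Proof.
split; first by case=> k hk ->; exists (cos (th R n k)), (sin (th R n k)); split => //; exists k.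
by case=> c [s [[k hk [-> ->]] ->]]; exists k.
Qed.

Lemma eq_mod1 (c s X Y K : R) : c * c + s * s = 1 -> X - Y = K * (1 - (c * c + s * s)) -> X = Y.
Proof. by move=> -> ; rewrite subrr mulr0 => /eqP; rewrite subr_eq0 => /eqP. Qed.

Lemma comb_sub (A B : V) c s c' s' k :
  (c' *: A + s' *: B) - k *: (c *: A + s *: B) = (c' - k * c) *: A + (s' - k * s) *: B.
Proof.
by rewrite scalerDr !scalerA opprD addrACA !scalerBl.
Qed.

Section Plane.
Variables A B : V.
Hypotheses (hAA : ip A A = 1) (hBB : ip B B = 1) (hAB : ip A B = 0).

Lemma norm1 x : D A B x -> ip x x = 1.
Proof.
case=> c [s [h ->]]; rewrite ip_comb hAA hBB (ipC B A) hAB -[RHS](ang_unit h); ring.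
Qed.

Lemma refl_same a x : D A B a -> D A B x -> D A B (reflect_in ip a x).
Proof.
move=> ha hx; have na := norm1 ha; rewrite /reflect_in na divr1; move: ha hx.
case=> c [s [h ->]]; case=> c' [s' [h' ->]].
rewrite ip_comb hAA hBB (ipC B A) hAB comb_sub.
have u := ang_unit h.
have -> : 2 * (c' * c * 1 + c' * s * 0 + s' * c * 0 + s' * s * 1) = 2 * (c' * c + s' * s) by ring.
have hh := ang_neg n0 (ang_add n0 (ang_add n0 h h) (ang_conj n0 h')).
eexists; eexists; split; first exact: hh.
congr (_ *: _ + _ *: _).
  apply: (eq_mod1 (K := c') u); ring.
apply: (eq_mod1 (K := s') u); ring.
Qed.
End Plane.

Lemma refl_diff A B A' B' a x :
  ip A A' = 0 -> ip A B' = 0 -> ip B A' = 0 -> ip B B' = 0 ->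
  D A B a -> D A' B' x -> reflect_in ip a x = x.
Proof.
move=> h1 h2 h3 h4 [c [s [_ ->]]] [c' [s' [_ ->]]].
rewrite /reflect_in ip_comb (ipC A') (ipC A') (ipC B') (ipC B') h1 h2 h3 h4.
by rewrite !mulr0 !addr0 mulr0 mul0r scale0r subr0.
Qed.

Lemma rs_lemma a1 b1 a2 b2 (Phi : V -> Prop) :
  [/\ ip a1 a1 = 1, ip b1 b1 = 1, ip a2 a2 = 1 & ip b2 b2 = 1] ->
  [/\ ip a1 b1 = 0, ip a1 a2 = 0 & ip a1 b2 = 0] ->
  [/\ ip b1 a2 = 0, ip b1 b2 = 0 & ip a2 b2 = 0] ->
  (forall x, Phi x <-> (dihedral_roots n a1 b1 x \/ dihedral_roots n a2 b2 x)) ->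
  is_root_system ip Phi.
Proof.
move=> [n1 n2 n3 n4] [o1 o2 o3] [o4 o5 o6] hP.
have hP' : forall x, Phi x <-> D a1 b1 x \/ D a2 b2 x.
  by move=> x; rewrite hP !dihedralP.
have nrm : forall x, Phi x -> ip x x = 1.
  by move=> x /hP' [] h; [apply: (norm1 n1 n2 o1) | apply: (norm1 n3 n4 o6)].
split.
- exists ([seq cos (th R n k) *: a1 + sin (th R n k) *: b1 | k <- iota 0 (2 * n)] ++
          [seq cos (th R n k) *: a2 + sin (th R n k) *: b2 | k <- iota 0 (2 * n)]).
  move=> x; rewrite hP mem_cat; split.
    case=> -[k hk ->]; apply/orP; [left|right]; apply/mapP; exists k => //;
      by rewrite mem_iota.
  case/orP => /mapP [k]; rewrite mem_iota add0n => /andP [_ hk] ->; [left|right]; by exists k.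
- move=> a /nrm h; apply/eqP => a0; move: h; rewrite a0.
  have -> : ip 0 0 = 0 by rewrite -(scale0r 0) ipZl mul0r.
  by move=> /eqP; rewrite eq_sym oner_eq0.
- move=> a ha k; split.
    move=> /nrm; rewrite ipZl ipZr (nrm _ ha) mulr1 => /eqP.
    rewrite -subr_eq0 (_ : k * k - 1 = (k - 1) * (k + 1)); last by ring.
    rewrite mulf_eq0 subr_eq0 addr_eq0 => /orP [] /eqP; by [left|right].
  case=> ->; first by rewrite scale1r.
  move: ha => /hP' [] [c [s [h ->]]]; apply/hP'; [left|right];
    exists (- c), (- s); split; [exact: ang_neg| |exact: ang_neg|];
    by rewrite scalerDr !scalerA !mulN1r.
- move=> a x /hP' ha /hP' hx; apply/hP'.
  case: ha => ha; case: hx => hx.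
  + by left; apply: (refl_same n1 n2 o1).
  + by rewrite (refl_diff o2 o3 o4 o5 ha hx); right.
  + by rewrite (refl_diff _ _ _ _ ha hx); [left| rewrite ipC| rewrite ipC | rewrite ipC | rewrite ipC].
  + by right; apply: (refl_same n3 n4 o6).
Qed.
End RS.


Section IP.
Variable R : realType.
Ltac gpx := repeat progress (rewrite ?vecE ?cl1E ?e123E ?clD ?clN ?clZ ?cl0 ?gpE ?revE ?sum_blade /= ?/bxor /=).
Ltac ipx := rewrite /spinor_ip /scal ?dotE; gpx; field; by [].

Lemma sipDl (x y z : cl3 R) : spinor_ip (x + y) z = spinor_ip x z + spinor_ip y z.
Proof. ipx. Qed.
Lemma sipZl k (x z : cl3 R) : spinor_ip (k *: x) z = k * spinor_ip x z.
Proof. ipx. Qed.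
Lemma sipC (x y : cl3 R) : spinor_ip x y = spinor_ip y x.
Proof. by rewrite /spinor_ip addrC. Qed.

Definition mk (v0 v1 v2 v3 v4 v5 v6 v7 : R) : cl3 R := [ffun a : blade =>
  match a with
  | (false,false,false) => v0
  | (false,false,true) => v1
  | (false,true,false) => v2
  | (false,true,true) => v3
  | (true,false,false) => v4
  | (true,false,true) => v5
  | (true,true,false) => v6
  | (true,true,true) => v7
  end].
Lemma mkE v0 v1 v2 v3 v4 v5 v6 v7 a : mk v0 v1 v2 v3 v4 v5 v6 v7 a =
  match a with
  | (false,false,false) => v0
  | (false,false,true) => v1
  | (false,true,false) => v2
  | (false,true,true) => v3
  | (true,false,false) => v4
  | (true,false,true) => v5
  | (true,true,false) => v6
  | (true,true,true) => v7
  end.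
Proof. by rewrite ffunE. Qed.

Lemma gp_mk x0 x1 x2 x3 x4 x5 x6 x7 y0 y1 y2 y3 y4 y5 y6 y7 : gp (mk x0 x1 x2 x3 x4 x5 x6 x7) (mk y0 y1 y2 y3 y4 y5 y6 y7) =
  mk (x0 * y0 + x1 * y1 + x2 * y2 - x3 * y3 + x4 * y4 - x5 * y5 - x6 * y6 - x7 * y7) (x0 * y1 + x1 * y0 + x2 * y3 - x3 * y2 + x4 * y5 - x5 * y4 - x6 * y7 - x7 * y6) (x0 * y2 - x1 * y3 + x2 * y0 + x3 * y1 + x4 * y6 + x5 * y7 - x6 * y4 + x7 * y5) (x0 * y3 - x1 * y2 + x2 * y1 + x3 * y0 + x4 * y7 + x5 * y6 - x6 * y5 + x7 * y4) (x0 * y4 - x1 * y5 - x2 * y6 - x3 * y7 + x4 * y0 + x5 * y1 + x6 * y2 - x7 * y3) (x0 * y5 - x1 * y4 - x2 * y7 - x3 * y6 + x4 * y1 + x5 * y0 + x6 * y3 - x7 * y2) (x0 * y6 + x1 * y7 - x2 * y4 + x3 * y5 + x4 * y2 - x5 * y3 + x6 * y0 + x7 * y1) (x0 * y7 + x1 * y6 - x2 * y5 + x3 * y4 + x4 * y3 - x5 * y2 + x6 * y1 + x7 * y0).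
Proof. apply/ffunP => -[[[] []] []]; rewrite gpE sum_blade /= !mkE /=; ring. Qed.

Lemma ip_mk x0 x1 x2 x3 x4 x5 x6 x7 y0 y1 y2 y3 y4 y5 y6 y7 : spinor_ip (mk x0 x1 x2 x3 x4 x5 x6 x7) (mk y0 y1 y2 y3 y4 y5 y6 y7) =
  x0 * y0 + x1 * y1 + x2 * y2 + x3 * y3 + x4 * y4 + x5 * y5 + x6 * y6 + x7 * y7.
Proof. rewrite /spinor_ip /scal !gpE !sum_blade /= !revE /= !mkE /=; field; by []. Qed.

Lemma vec_mk (p : 'rV[R]_3) : vec p = mk 0 (p ord0 2) (p ord0 1) 0 (p ord0 0) 0 0 0.
Proof. apply/ffunP => -[[[] []] []]; by rewrite vecE mkE. Qed.
Lemma e123_mk : e123 R = mk 0 0 0 0 0 0 0 1.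
Proof. apply/ffunP => -[[[] []] []]; by rewrite e123E mkE. Qed.
Lemma cl1_mk : cl1 R = mk 1 0 0 0 0 0 0 0.
Proof. apply/ffunP => -[[[] []] []]; by rewrite cl1E mkE. Qed.

Section V.
Variables p q : 'rV[R]_3.
Local Notation I := (e123 R).
Ltac mkx := rewrite ?e123_mk ?cl1_mk !vec_mk !gp_mk ip_mk ?dotE; ring.
Lemma ip11 : spinor_ip (cl1 R) (cl1 R) = 1. Proof. rewrite cl1_mk ip_mk; ring. Qed.
Lemma ipBB : spinor_ip (gp (vec p) (vec q)) (gp (vec p) (vec q)) = dot p p * dot q q.
Proof. mkx. Qed.
Lemma ipIp : spinor_ip (gp I (vec p)) (gp I (vec p)) = dot p p. Proof. mkx. Qed.
Lemma ipIpIq : spinor_ip (gp I (vec p)) (gp I (vec q)) = dot p q. Proof. mkx. Qed.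
Lemma ip1B : spinor_ip (cl1 R) (gp (vec p) (vec q)) = dot p q. Proof. mkx. Qed.
Lemma ip1I : spinor_ip (cl1 R) (gp I (vec p)) = 0. Proof. mkx. Qed.
Lemma ipBI (r : 'rV[R]_3) : spinor_ip (gp (vec p) (vec q)) (gp I (vec r)) =
  r ord0 0 * (p ord0 1 * q ord0 2 - p ord0 2 * q ord0 1)
  + r ord0 1 * (p ord0 2 * q ord0 0 - p ord0 0 * q ord0 2)
  + r ord0 2 * (p ord0 0 * q ord0 1 - p ord0 1 * q ord0 0).
Proof. mkx. Qed.
End V.
End IP.


Section Grp.
Variable R : realType.
Variable n : nat.
Hypothesis n0 : (0 < n)%N.
Variables U W : cl3 R.
Hypotheses (UU : gp U U = cl1 R) (WW : gp W W = cl1 R) (WU : gp W U = - gp U W).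
Hypotheses (oU : odd_elt U) (oW : odd_elt W).

Local Notation I := (e123 R).
Local Notation Bv := (gp U W).
Definition Vc (a b : R) : cl3 R := a *: U + b *: W.
Definition Rc (a b : R) : cl3 R := a *: cl1 R + b *: Bv.

Lemma gpNl (x y : cl3 R) : gp (- x) y = - gp x y.
Proof. by rewrite -scaleN1r gpZl scaleN1r. Qed.
Lemma gpNr (x y : cl3 R) : gp y (- x) = - gp y x.
Proof. by rewrite -scaleN1r gpZr scaleN1r. Qed.
Lemma gp0r (x : cl3 R) : gp x 0 = 0.
Proof. by have := gpZr 0 0 x; rewrite !scale0r. Qed.

Lemma UB : gp U Bv = W. Proof. by rewrite -gpA UU g1p. Qed.
Lemma WB : gp W Bv = - U. Proof. by rewrite -gpA WU gpNl gpA WW gp1. Qed.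

Ltac lin := let B0 := fresh "B0" in let U0 := fresh "U0" in let W0 := fresh "W0" in let O := fresh "O" in
  move: (gp U W) (cl1 R) => B0 O; apply/ffunP => ?; rewrite !(clD, clZ, clN); ring.

Lemma VV a b c d : gp (Vc a b) (Vc c d) = Rc (a * c + b * d) (a * d - b * c).
Proof. rewrite /Vc /Rc gpDl !gpDr !gpZl !gpZr UU WW WU; lin. Qed.
Lemma VR a b c d : gp (Vc a b) (Rc c d) = Vc (a * c - b * d) (b * c + a * d).
Proof. rewrite /Vc /Rc gpDl !gpDr !gpZl !gpZr !gp1 UB WB; lin. Qed.
Lemma UV c d : gp U (Vc c d) = Rc c d.
Proof. rewrite /Vc /Rc gpDr !gpZr UU; lin. Qed.
Lemma RcN c d : - Rc c d = Rc (- c) (- d).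
Proof. rewrite /Rc; lin. Qed.
Lemma VcN c d : - Vc c d = Vc (- c) (- d).
Proof. rewrite /Vc; lin. Qed.
Lemma Rc10 : Rc 1 0 = cl1 R.
Proof. by rewrite /Rc scale1r scale0r addr0. Qed.

Lemma VVself a b : ang n a b -> gp (Vc a b) (Vc a b) = cl1 R.
Proof. by move=> h; rewrite VV (ang_unit h) (_ : a * b - b * a = 0) ?Rc10 //; ring. Qed.

Definition Gen (y : cl3 R) := (exists c s, ang n c s /\ y = Vc c s) \/ y = I.

Definition Sx (x : cl3 R) := exists c s, ang n c s /\
  [\/ x = Rc c s, x = Vc c s, x = gp I (Rc c s) | x = gp I (Vc c s)].

Lemma Sx_N x : Sx x -> Sx (- x).
Proof.
case=> c [s [h hx]]; exists (- c), (- s); split; first exact: ang_neg.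
by case: hx => ->; [constructor 1; rewrite RcN | constructor 2; rewrite VcN
  | constructor 3; rewrite -gpNr RcN | constructor 4; rewrite -gpNr VcN].
Qed.

Lemma Sx_I x : Sx x -> Sx (gp I x).
Proof.
move=> hS; case: (hS) => c [s [h hx]].
case: hx => ->.
- by exists c, s; split => //; constructor 3.
- by exists c, s; split => //; constructor 4.
- rewrite -gpA gpII gpNl g1p; apply: Sx_N; exists c, s; split => //; by constructor 1.
- rewrite -gpA gpII gpNl g1p; apply: Sx_N; exists c, s; split => //; by constructor 2.
Qed.

Lemma Sx_V a b x : ang n a b -> Sx x -> Sx (gp (Vc a b) x).
Proof.
move=> ha [c [s [h hx]]].
have hVR := ang_add n0 ha h.
have hVV : ang n (a * c + b * s) (a * s - b * c).
  by apply: (ang_eq (ang_add n0 (ang_conj n0 ha) h)); ring.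
case: hx => ->.
- by rewrite VR; do 2 eexists; split; first exact: hVR; constructor 2.
- by rewrite VV; do 2 eexists; split; first exact: hVV; constructor 1.
- rewrite -gpA -gpIC gpA VR; do 2 eexists; split; first exact: hVR; by constructor 4.
- rewrite -gpA -gpIC gpA VV; do 2 eexists; split; first exact: hVV; by constructor 3.
Qed.

Lemma sub_Sx x : gen_group Gen x -> Sx x.
Proof.
elim=> [|s y hs _ IH].
  by exists 1, 0; split; [exact: ang1 | constructor 1; rewrite Rc10].
case: hs => [[[a [b [hab ->]]] | ->]|[t [[[a [b [hab ->]]] | ->] [h1 h2]]]].
- exact: Sx_V.
- exact: Sx_I.
- have -> : s = Vc a b.
    by rewrite -[s]gp1 -(VVself hab) -gpA h2 g1p.
  exact: Sx_V.
- have -> : s = - I.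
    by rewrite -[s]gp1 -[cl1 R]opprK -gpII -gpNr -gpA h2 g1p.
  by rewrite gpNl; apply: Sx_N; apply: Sx_I.
Qed.

Lemma Rc_even c d : even_elt (Rc c d).
Proof. exact: (even_lin _ _ (@cl1_even R) (gp_oo oU oW)). Qed.
Lemma IV_even c d : even_elt (gp I (Vc c d)).
Proof. exact: (gp_oo (@e123_odd R) (odd_lin _ _ oU oW)). Qed.
Lemma Vc_odd c d : odd_elt (Vc c d).
Proof. exact: (odd_lin _ _ oU oW). Qed.
Lemma IR_odd c d : odd_elt (gp I (Rc c d)).
Proof. exact: (gp_oe (@e123_odd R) (Rc_even _ _)). Qed.

Lemma cl1_neq0 : cl1 R != 0.
Proof. apply/eqP => /ffunP /(_ (false,false,false)); rewrite cl1E cl0 /=; apply/eqP; exact: oner_neq0. Qed.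

Lemma Vc_neq0 c d : ang n c d -> Vc c d != 0.
Proof.
move=> h; apply/eqP => e; have := VVself h; rewrite e gp0r => e1.
by move: cl1_neq0; rewrite -e1 eqxx.
Qed.

Lemma IR_neq0 c d : ang n c d -> gp I (Rc c d) != 0.
Proof.
move=> h; apply/eqP => e.
have e1 : Rc c d = 0.
  by rewrite -[Rc c d]g1p -[cl1 R]opprK -gpII -gpNl gpA e gp0r.
have : Vc c d = 0 by rewrite -[Vc c d]g1p -UU gpA UV e1 gp0r.
by apply/eqP/Vc_neq0.
Qed.

Lemma PhiE x : (gen_group Gen x /\ even_elt x) <->
  (dihedral_roots n (cl1 R) Bv x \/ dihedral_roots n (gp I U) (gp I W) x).
Proof.
rewrite !(@dihedralP R n (cl3 R)); split.
  case=> /sub_Sx [c [s [h hx]]] he; case: hx => e.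
  - by left; exists c, s; split.
  - by move: (Vc_neq0 h); rewrite -e (eo0 he) ?eqxx // e; apply: Vc_odd.
  - by move: (IR_neq0 h); rewrite -e (eo0 he) ?eqxx // e; apply: IR_odd.
  - by right; exists c, s; split => //; rewrite e /Vc gpDr !gpZr.
have gU : Gen U.
  left; exists 1, 0; split; first exact: ang1.
  by rewrite /Vc scale1r scale0r addr0.
case=> -[c [s [h ->]]].
  have e : c *: cl1 R + s *: Bv = gp U (gp (Vc c s) (cl1 R)) by rewrite gp1 UV.
  rewrite e; split; last by rewrite -e; apply: Rc_even.
  apply: gen_group_mul; first by left.
  apply: gen_group_mul; last exact: gen_group_one.
  by left; left; exists c, s.
have e : c *: gp I U + s *: gp I W = gp I (gp (Vc c s) (cl1 R)) by rewrite gp1 /Vc gpDr !gpZr.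
rewrite e gp1; split; last exact: IV_even.
apply: gen_group_mul; first by left; right.
rewrite -[Vc c s]gp1; apply: gen_group_mul; last exact: gen_group_one.
by left; left; exists c, s.
Qed.
End Grp.

End Helpers.
Import Helpers.


Lemma gen_group_ext (R : realType) (S1 S2 : cl3 R -> Prop) x :
  (forall y, S1 y <-> S2 y) -> gen_group S1 x -> gen_group S2 x.
Proof.
move=> h; elim=> [|s y hs _ IH]; first exact: gen_group_one.
apply: gen_group_mul IH; case: hs => [/h hs|[t [/h ht e]]]; [left | right; exists t] => //.
Qed.

Theorem mainTheorem3 (R : realType) (n : nat) (u v : 'rV[R]_3) :
  (2 <= n)%N -> ~~ odd n ->
  dot u u = 1 -> dot v v = 1 -> dot u v = 0 ->
  is_root_system (@spinor_ip R)
    (fun x => gen_group (fun y => I2_in_R3 n u v y \/ y = e123 R) x /\ even_elt x)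
  /\ type_I2_sum_I2 (@spinor_ip R) n
    (fun x => gen_group (fun y => I2_in_R3 n u v y \/ y = e123 R) x /\ even_elt x).
Proof.
move=> hn _ huu hvv huv.
have n0 : (0 < n)%N by lia.
have UU : gp (vec u) (vec u) = cl1 R by rewrite vec_sq huu scale1r.
have WW : gp (vec v) (vec v) = cl1 R by rewrite vec_sq hvv scale1r.
have WU : gp (vec v) (vec u) = - gp (vec u) (vec v).
  by apply/eqP; rewrite -addr_eq0 addrC vec_anti huv mulr0 scale0r.
have hG : forall y, (I2_in_R3 n u v y \/ y = e123 R) <-> Gen n (vec u) (vec v) y.
  move=> y; rewrite /Gen; split; case=> [h|->]; try by right.
    by case: h => k hk ->; left; exists (cos (th R n k)), (sin (th R n k));
      rewrite vec_lin; split => //; exists k.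
  by case: h => c [s [[k hk [-> ->]] ->]]; left; exists k => //; rewrite vec_lin.
have hPhi : forall x,
  (gen_group (fun y => I2_in_R3 n u v y \/ y = e123 R) x /\ even_elt x) <->
  (dihedral_roots n (cl1 R) (gp (vec u) (vec v)) x \/
   dihedral_roots n (gp (e123 R) (vec u)) (gp (e123 R) (vec v)) x).
  move=> x; rewrite -(PhiE n0 UU WW WU (vec_odd u) (vec_odd v)).
  split; case=> h1 h2; split => //; apply: gen_group_ext h1 => y; [|split => /hG].
    exact: hG.
  by [].
  by [].
have o1 : [/\ spinor_ip (cl1 R) (cl1 R) = 1,
    spinor_ip (gp (vec u) (vec v)) (gp (vec u) (vec v)) = 1,
    spinor_ip (gp (e123 R) (vec u)) (gp (e123 R) (vec u)) = 1 &
    spinor_ip (gp (e123 R) (vec v)) (gp (e123 R) (vec v)) = 1].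
  by rewrite ip11 ipBB !ipIp huu hvv mulr1.
have o2 : [/\ spinor_ip (cl1 R) (gp (vec u) (vec v)) = 0,
    spinor_ip (cl1 R) (gp (e123 R) (vec u)) = 0 &
    spinor_ip (cl1 R) (gp (e123 R) (vec v)) = 0].
  by rewrite ip1B !ip1I huv.
have o3 : [/\ spinor_ip (gp (vec u) (vec v)) (gp (e123 R) (vec u)) = 0,
    spinor_ip (gp (vec u) (vec v)) (gp (e123 R) (vec v)) = 0 &
    spinor_ip (gp (e123 R) (vec u)) (gp (e123 R) (vec v)) = 0].
  by rewrite !ipBI ipIpIq huv; split => //; ring.
split.
  exact: (rs_lemma n0 (@sipDl R) (@sipZl R) (@sipC R) o1 o2 o3 hPhi).
by exists (cl1 R), (gp (vec u) (vec v)), (gp (e123 R) (vec u)), (gp (e123 R) (vec v)).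
Qed.
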